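(* Let $A$ be any algebra (over a field of characteristic $0$) that is alternative and satisfies $(ab)c=(ba)c$ for all $a,b,c$. Then for all $a,b,c,d\in A$: \[ ((ab)c)d=((ac)b)d,\qquad d((ab)c)=((ab)d)c,\qquad d(c(ab))=((ac)d)b. \]
   Context: An algebra is alternative if $(x,x,y)=0=(x,y,y)$ for all $x,y$, where $(x,y,z)=(xy)z-x(yz)$. This variety is the Koszul dual of the variety of left-symmetric algebras satisfying $a(bc)+b(ac)+a(cb)+c(ab)+b(ca)+c(ba)=0$. *)

(* Defs.v *)
From mathcomp Require Import all_boot all_order all_algebra.
Set Implicit Arguments. Unset Strict Implicit. Unset Printing Implicit Defensive.
Import GRing.Theory.
Local Open Scope ring_scope.

Definition bilinear_mul (F : fieldType) (V : lmodType F) (mul : V -> V -> V) :=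
  (forall (a : F) (x y z : V), mul (a *: x + y) z = a *: mul x z + mul y z) /\
  (forall (a : F) (x y z : V), mul x (a *: y + z) = a *: mul x y + mul x z).

Definition assoc (F : fieldType) (V : lmodType F) (mul : V -> V -> V) (x y z : V) :=
  mul (mul x y) z - mul x (mul y z).

Definition alternative (F : fieldType) (V : lmodType F) (mul : V -> V -> V) :=
  forall x y : V, assoc mul x x y = 0 /\ assoc mul x y y = 0.

(* Main.v *)
Require Import Defs.
From mathcomp Require Import all_boot all_order all_algebra.
Set Implicit Arguments. Unset Strict Implicit. Unset Printing Implicit Defensive.
Import GRing.Theory.
Local Open Scope ring_scope.

Inductive lexp := LAtom of nat | LAdd of lexp & lexp | LOpp of lexp | LZero
  | LMulz of lexp & int.

Fixpoint cadd (l1 l2 : seq int) : seq int :=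
  match l1, l2 with
  | [::], _ => l2
  | _, [::] => l1
  | x :: l1', y :: l2' => (x + y) :: cadd l1' l2'
  end.
Definition cscale (z : int) (l : seq int) := map (fun x => x * z) l.
Fixpoint norm (e : lexp) : seq int :=
  match e with
  | LAtom n => ncons n 0 [:: 1]
  | LAdd a b => cadd (norm a) (norm b)
  | LOpp a => cscale (-1) (norm a)
  | LZero => [::]
  | LMulz a z => cscale z (norm a)
  end.

Section Lin.
Variable V : zmodType.
Fixpoint leval (env : seq V) (e : lexp) : V :=
  match e with
  | LAtom n => nth 0 env n
  | LAdd a b => leval env a + leval env b
  | LOpp a => - leval env a
  | LZero => 0
  | LMulz a z => leval env a *~ z
  end.
Fixpoint ceval (env : seq V) (l : seq int) : V :=
  match l with
  | [::] => 0
  | x :: l' => head 0 env *~ x + ceval (behead env) l'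
  end.
Lemma ceval_add env l1 l2 : ceval env (cadd l1 l2) = ceval env l1 + ceval env l2.
Proof.
elim: l1 env l2 => [|x l1 IH] env [|y l2] /=; rewrite ?add0r ?addr0 //.
by rewrite IH mulrzDr addrACA.
Qed.
Lemma ceval_scale env z l : ceval env (cscale z l) = ceval env l *~ z.
Proof.
elim: l env => [|x l IH] env /=; first by rewrite mul0rz.
by rewrite IH mulrzDl mulrzA.
Qed.
Lemma ceval_atom env n : ceval env (ncons n 0 [:: 1]) = nth 0 env n.
Proof.
elim: n env => [|n IH] [|x env] /=; rewrite ?mulr0z ?add0r ?addr0 //.
- by rewrite IH; case: n {IH}.
Qed.
Lemma leval_norm env e : leval env e = ceval env (norm e).
Proof.
elim: e => [n|a IHa b IHb|a IH||a IH z] /=.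
- by rewrite ceval_atom.
- by rewrite ceval_add IHa IHb.
- by rewrite ceval_scale IH mulrN1z.
- by [].
- by rewrite ceval_scale IH.
Qed.
Lemma ceval_zero env l : all (fun z => z == 0) l -> ceval env l = 0.
Proof.
elim: l env => [|x l IH] env //= /andP[/eqP -> H].
by rewrite mulr0z add0r IH.
Qed.
Lemma leval_zero env e : all (fun z => z == 0) (norm e) -> leval env e = 0.
Proof. by move=> H; rewrite leval_norm ceval_zero. Qed.
Lemma lstep (E T : V) (n : int) : E = 0 -> T - E *~ n = 0 -> T = 0.
Proof. by move=> ->; rewrite mul0rz subr0. Qed.
End Lin.

Ltac memb x env := lazymatch env with
  | nil => constr:(false)
  | cons x _ => constr:(true)
  | cons _ ?e => memb x e
  end.
Ltac collect t env := lazymatch t with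
  | ?a + ?b => let env := collect a env in collect b env
  | - ?a => collect a env
  | 0 => env
  | ?a *~ ?z => collect a env
  | ?a *+ ?n => collect a env
  | _ => let b := memb t env in
         lazymatch b with true => env | false => constr:(cons t env) end
  end.
Ltac find_index x env := lazymatch env with
  | cons x _ => constr:(O)
  | cons _ ?e => let n := find_index x e in constr:(S n)
  end.
Ltac reify t env := lazymatch t with
  | ?a + ?b => let x := reify a env in let y := reify b env in constr:(LAdd x y)
  | - ?a => let x := reify a env in constr:(LOpp x)
  | 0 => constr:(LZero)
  | ?a *~ ?z => let x := reify a env in constr:(LMulz x z)
  | ?a *+ ?n => let x := reify a env in constr:(LMulz x (Posz n))
  | _ => let n := find_index t env in constr:(LAtom n)
  end.
Ltac lin := lazymatch goal with
  | |- @eq ?T ?t 0 =>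
    let env := collect t (@nil T) in
    let e := reify t env in
    change (leval env e = 0); apply: leval_zero; vm_compute; reflexivity
  end.

Section Alg.
Variables (F : fieldType) (V : lmodType F) (mul : V -> V -> V).
Hypothesis hchar : [pchar F] =i pred0.
Hypothesis hbil : bilinear_mul mul.
Hypothesis halt : alternative mul.
Hypothesis hcom : forall a b c : V, mul (mul a b) c = mul (mul b a) c.

Lemma mDl x y z : mul (x + y) z = mul x z + mul y z.
Proof. by have := (proj1 hbil) 1 x y z; rewrite !scale1r. Qed.
Lemma mDr x y z : mul x (y + z) = mul x y + mul x z.
Proof. by have := (proj2 hbil) 1 x y z; rewrite !scale1r. Qed.
Lemma m0l z : mul 0 z = 0.
Proof. by apply: (addrI (mul 0 z)); rewrite -mDl !addr0. Qed.
Lemma m0r z : mul z 0 = 0.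
Proof. by apply: (addrI (mul z 0)); rewrite -mDr !addr0. Qed.
Lemma mNl x z : mul (- x) z = - mul x z.
Proof. by apply: (addrI (mul x z)); rewrite -mDl !subrr m0l. Qed.
Lemma mNr x z : mul z (- x) = - mul z x.
Proof. by apply: (addrI (mul z x)); rewrite -mDr !subrr m0r. Qed.

Lemma unz (T : V) n : (0 < n)%N -> T *+ n = 0 -> T = 0.
Proof.
move=> n0 H; have nz : (n%:R : F) != 0 by rewrite ((pcharf0P F).1 hchar) -lt0n.
by apply: (scalerI nz); rewrite scaler_nat H scaler0.
Qed.

Lemma hA x y z : mul (mul x y) z - mul x (mul y z) + (mul (mul y x) z - mul y (mul x z)) = 0.
Proof.
have := proj1 (halt (x + y) z); have := proj1 (halt x z); have := proj1 (halt y z).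
rewrite /assoc !(mDl, mDr, mNl, mNr) => h1 h2 h3.
apply: (@lstep _ _ _ 1 h3); apply: (@lstep _ _ _ (-1) h2); apply: (@lstep _ _ _ (-1) h1); lin.
Qed.
Lemma hB x y z : mul (mul x y) z - mul x (mul y z) + (mul (mul x z) y - mul x (mul z y)) = 0.
Proof.
have := proj2 (halt x (y + z)); have := proj2 (halt x y); have := proj2 (halt x z).
rewrite /assoc !(mDl, mDr, mNl, mNr) => h1 h2 h3.
apply: (@lstep _ _ _ 1 h3); apply: (@lstep _ _ _ (-1) h2); apply: (@lstep _ _ _ (-1) h1); lin.
Qed.
Lemma hC x y z : mul (mul x y) z - mul (mul y x) z = 0.
Proof. by rewrite hcom subrr. Qed.

Lemma hAR x y z t : mul (mul (mul x y) z) t - mul (mul x (mul y z)) t + (mul (mul (mul y x) z) t - mul (mul y (mul x z)) t) = 0.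
Proof. by move/(congr1 (mul^~ t)): (hA x y z); rewrite !(mDl, mNl) m0l. Qed.
Lemma hBR x y z t : mul (mul (mul x y) z) t - mul (mul x (mul y z)) t + (mul (mul (mul x z) y) t - mul (mul x (mul z y)) t) = 0.
Proof. by move/(congr1 (mul^~ t)): (hB x y z); rewrite !(mDl, mNl) m0l. Qed.
Lemma hCR x y z t : mul (mul (mul x y) z) t - mul (mul (mul y x) z) t = 0.
Proof. by move/(congr1 (mul^~ t)): (hC x y z); rewrite !(mDl, mNl) m0l. Qed.
Lemma hAL x y z t : mul t (mul (mul x y) z) - mul t (mul x (mul y z)) + (mul t (mul (mul y x) z) - mul t (mul y (mul x z))) = 0.
Proof. by move/(congr1 (mul t)): (hA x y z); rewrite !(mDr, mNr) m0r. Qed.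
Lemma hBL x y z t : mul t (mul (mul x y) z) - mul t (mul x (mul y z)) + (mul t (mul (mul x z) y) - mul t (mul x (mul z y))) = 0.
Proof. by move/(congr1 (mul t)): (hB x y z); rewrite !(mDr, mNr) m0r. Qed.
Lemma hCL x y z t : mul t (mul (mul x y) z) - mul t (mul (mul y x) z) = 0.
Proof. by move/(congr1 (mul t)): (hC x y z); rewrite !(mDr, mNr) m0r. Qed.
Lemma goal0 a b c d : mul (mul (mul a b) c) d - mul (mul (mul a c) b) d = 0.
Proof.
apply: (unz (n:=3%N) isT).
apply: (@lstep _ _ _ (1%:Z) (hCR a b c d)).
apply: (@lstep _ _ _ (- 2%:Z) (hC (mul a c) b d)).
apply: (@lstep _ _ _ (3%:Z) (hAR a b c d)).
apply: (@lstep _ _ _ (- 1%:Z) (hBR b a c d)).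
apply: (@lstep _ _ _ (1%:Z) (hA (mul b c) a d)).
apply: (@lstep _ _ _ (- 1%:Z) (hA (mul c b) a d)).
apply: (@lstep _ _ _ (1%:Z) (hC b c (mul a d))).
apply: (@lstep _ _ _ (- 1%:Z) (hC (mul b a) c d)).
apply: (@lstep _ _ _ (- 1%:Z) (hC (mul b c) a d)).
apply: (@lstep _ _ _ (1%:Z) (hCL b c d a)).
apply: (@lstep _ _ _ (- 1%:Z) (hBR a b c d)).
apply: (@lstep _ _ _ (1%:Z) (hAR b c a d)).
lin.
Qed.

Lemma g0 a b c d : mul (mul (mul a b) c) d - mul (mul (mul a c) b) d = 0.
Proof. exact: goal0. Qed.

Lemma goal1 a b c d : mul d (mul (mul a b) c) - mul (mul (mul a b) d) c = 0.
Proof.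
apply: (unz (n:=12%N) isT).
apply: (@lstep _ _ _ (4%:Z) (hAL a b c d)).
apply: (@lstep _ _ _ (- 1%:Z) (hA (mul b a) c d)).
apply: (@lstep _ _ _ (1%:Z) (hAL a c d b)).
apply: (@lstep _ _ _ (1%:Z) (hAR b c a d)).
apply: (@lstep _ _ _ (12%:Z) (hB (mul a b) c d)).
apply: (@lstep _ _ _ (- 13%:Z) (hA (mul a b) c d)).
apply: (@lstep _ _ _ (- 2%:Z) (hAR a d c b)).
apply: (@lstep _ _ _ (- 2%:Z) (hAR a c d b)).
apply: (@lstep _ _ _ (3%:Z) (hAR a b c d)).
apply: (@lstep _ _ _ (1%:Z) (hAR a c b d)).
apply: (@lstep _ _ _ (- 1%:Z) (hA (mul c a) b d)).
apply: (@lstep _ _ _ (- 12%:Z) (hA (mul a b) d c)).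
apply: (@lstep _ _ _ (- 6%:Z) (hC (mul a b) c d)).
apply: (@lstep _ _ _ (- 4%:Z) (hA (mul d a) b c)).
apply: (@lstep _ _ _ (4%:Z) (hB (mul d a) b c)).
apply: (@lstep _ _ _ (2%:Z) (hA a d (mul c b))).
apply: (@lstep _ _ _ (4%:Z) (hBR a c d b)).
apply: (@lstep _ _ _ (- 1%:Z) (hA b c (mul a d))).
apply: (@lstep _ _ _ (- 7%:Z) (hAL a b d c)).
apply: (@lstep _ _ _ (- 12%:Z) (hC (mul a b) d c)).
apply: (@lstep _ _ _ (- 4%:Z) (hB (mul c b) a d)).
apply: (@lstep _ _ _ (- 4%:Z) (hA b c (mul d a))).
apply: (@lstep _ _ _ (4%:Z) (hAL b c a d)).
apply: (@lstep _ _ _ (- 4%:Z) (hA c d (mul b a))).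
apply: (@lstep _ _ _ (- 2%:Z) (hBR b a c d)).
apply: (@lstep _ _ _ (6%:Z) (hC (mul b a) c d)).
apply: (@lstep _ _ _ (- 6%:Z) (hCL a b d c)).
apply: (@lstep _ _ _ (- 4%:Z) (hB (mul a c) b d)).
apply: (@lstep _ _ _ (6%:Z) (hCR a b c d)).
apply: (@lstep _ _ _ (2%:Z) (hCL b c d a)).
apply: (@lstep _ _ _ (2%:Z) (hCL a c d b)).
apply: (@lstep _ _ _ (2%:Z) (hA (mul a c) d b)).
apply: (@lstep _ _ _ (2%:Z) (hC (mul a c) b d)).
apply: (@lstep _ _ _ (2%:Z) (hC (mul b c) a d)).
apply: (@lstep _ _ _ (- 2%:Z) (hBR a b c d)).
apply: (@lstep _ _ _ (- 1%:Z) (hA a b (mul c d))).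
apply: (@lstep _ _ _ (1%:Z) (hAL b c d a)).
apply: (@lstep _ _ _ (- 1%:Z) (hA a c (mul b d))).
apply: (@lstep _ _ _ (- 2%:Z) (hAR c d a b)).
apply: (@lstep _ _ _ (8%:Z) (hB c (mul b a) d)).
apply: (@lstep _ _ _ (- 4%:Z) (hBL b a c d)).
apply: (@lstep _ _ _ (4%:Z) (hB b (mul d a) c)).
apply: (@lstep _ _ _ (8%:Z) (hBL b a d c)).
apply: (@lstep _ _ _ (- 4%:Z) (hC c d (mul b a))).
apply: (@lstep _ _ _ (- 4%:Z) (hAL b d a c)).
apply: (@lstep _ _ _ (4%:Z) (hA (mul b c) d a)).
apply: (@lstep _ _ _ (3%:Z) (hA (mul c b) a d)).
apply: (@lstep _ _ _ (4%:Z) (hCL b c a d)).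
apply: (@lstep _ _ _ (- 4%:Z) (hBL a b c d)).
apply: (@lstep _ _ _ (- 4%:Z) (hCL b d a c)).
apply: (@lstep _ _ _ (- 4%:Z) (hCR b c d a)).
apply: (@lstep _ _ _ (4%:Z) (hC (mul b c) d a)).
apply: (@lstep _ _ _ (- 4%:Z) (hB (mul b c) a d)).
apply: (@lstep _ _ _ (- 4%:Z) (hB a (mul c b) d)).
apply: (@lstep _ _ _ (2%:Z) (hA (mul d c) a b)).
apply: (@lstep _ _ _ (- 2%:Z) (hA a c (mul d b))).
apply: (@lstep _ _ _ (2%:Z) (hAL c d b a)).
apply: (@lstep _ _ _ (2%:Z) (hA (mul c d) a b)).
apply: (@lstep _ _ _ (2%:Z) (hAL a c b d)).
apply: (@lstep _ _ _ (- 2%:Z) (hA c d (mul a b))).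
apply: (@lstep _ _ _ (- 2%:Z) (hA (mul a d) c b)).
apply: (@lstep _ _ _ (- 2%:Z) (hA (mul d a) c b)).
apply: (@lstep _ _ _ (- 4%:Z) (hCL a d b c)).
apply: (@lstep _ _ _ (4%:Z) (hCL a c b d)).
apply: (@lstep _ _ _ (8%:Z) (hBL a b d c)).
apply: (@lstep _ _ _ (- 2%:Z) (hA (mul c a) d b)).
apply: (@lstep _ _ _ (- 6%:Z) (hAL a d b c)).
apply: (@lstep _ _ _ (- 4%:Z) (hCR a c d b)).
apply: (@lstep _ _ _ (4%:Z) (hC (mul a c) d b)).
apply: (@lstep _ _ _ (8%:Z) (hB c (mul a b) d)).
apply: (@lstep _ _ _ (- 4%:Z) (hC c d (mul a b))).
apply: (@lstep _ _ _ (3%:Z) (hA (mul b c) a d)).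
apply: (@lstep _ _ _ (3%:Z) (hA (mul a c) b d)).
lin.
Qed.

Lemma goal2 a b c d : mul d (mul c (mul a b)) - mul (mul (mul a c) d) b = 0.
Proof.
apply: (unz (n:=3%N) isT).
apply: (@lstep _ _ _ (- 4%:Z) (hB (mul a b) c d)).
apply: (@lstep _ _ _ (- 2%:Z) (hA a b (mul d c))).
apply: (@lstep _ _ _ (2%:Z) (hAL b d c a)).
apply: (@lstep _ _ _ (2%:Z) (hA (mul b d) a c)).
apply: (@lstep _ _ _ (1%:Z) (hAR a b d c)).
apply: (@lstep _ _ _ (- 3%:Z) (hAL a d c b)).
apply: (@lstep _ _ _ (2%:Z) (hA (mul d b) a c)).
apply: (@lstep _ _ _ (1%:Z) (hAR a d b c)).
apply: (@lstep _ _ _ (- 1%:Z) (hA (mul c a) b d)).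
apply: (@lstep _ _ _ (3%:Z) (hA (mul c b) a d)).
apply: (@lstep _ _ _ (- 4%:Z) (hAR b c a d)).
apply: (@lstep _ _ _ (- 1%:Z) (hA (mul b a) c d)).
apply: (@lstep _ _ _ (3%:Z) (hBL a b c d)).
apply: (@lstep _ _ _ (1%:Z) (hBR a b d c)).
apply: (@lstep _ _ _ (- 1%:Z) (hC b d (mul a c))).
apply: (@lstep _ _ _ (5%:Z) (hBL a c d b)).
apply: (@lstep _ _ _ (- 4%:Z) (hA (mul a c) b d)).
apply: (@lstep _ _ _ (- 3%:Z) (hAR a b c d)).
apply: (@lstep _ _ _ (- 4%:Z) (hAL a c d b)).
apply: (@lstep _ _ _ (- 3%:Z) (hAL a c b d)).
apply: (@lstep _ _ _ (- 1%:Z) (hB b (mul d a) c)).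
apply: (@lstep _ _ _ (1%:Z) (hA b c (mul d a))).
apply: (@lstep _ _ _ (- 2%:Z) (hBL b a d c)).
apply: (@lstep _ _ _ (1%:Z) (hB (mul c b) a d)).
apply: (@lstep _ _ _ (1%:Z) (hA b d (mul a c))).
apply: (@lstep _ _ _ (- 2%:Z) (hAL a b c d)).
apply: (@lstep _ _ _ (2%:Z) (hA (mul a b) d c)).
apply: (@lstep _ _ _ (2%:Z) (hCL a b d c)).
apply: (@lstep _ _ _ (2%:Z) (hC (mul a b) c d)).
apply: (@lstep _ _ _ (- 3%:Z) (hC b c (mul a d))).
apply: (@lstep _ _ _ (2%:Z) (hBR a b c d)).
apply: (@lstep _ _ _ (- 1%:Z) (hA a d (mul b c))).
apply: (@lstep _ _ _ (- 1%:Z) (hA (mul d a) b c)).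
apply: (@lstep _ _ _ (1%:Z) (hAL a b d c)).
apply: (@lstep _ _ _ (- 2%:Z) (hA (mul a d) b c)).
apply: (@lstep _ _ _ (- 2%:Z) (hCL b c d a)).
apply: (@lstep _ _ _ (1%:Z) (hC (mul a b) d c)).
apply: (@lstep _ _ _ (- 1%:Z) (hCR a b d c)).
apply: (@lstep _ _ _ (- 2%:Z) (hC (mul a c) b d)).
apply: (@lstep _ _ _ (1%:Z) (hC (mul b a) c d)).
apply: (@lstep _ _ _ (- 1%:Z) (hB a (mul b c) d)).
apply: (@lstep _ _ _ (2%:Z) (hB b (mul a c) d)).
apply: (@lstep _ _ _ (1%:Z) (hBL b a c d)).
apply: (@lstep _ _ _ (- 1%:Z) (hAL b c a d)).
apply: (@lstep _ _ _ (1%:Z) (hA c d (mul b a))).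
apply: (@lstep _ _ _ (- 2%:Z) (hB c (mul b a) d)).
apply: (@lstep _ _ _ (1%:Z) (hC c d (mul b a))).
apply: (@lstep _ _ _ (1%:Z) (hAL b d a c)).
apply: (@lstep _ _ _ (- 1%:Z) (hA (mul b c) d a)).
apply: (@lstep _ _ _ (- 1%:Z) (hCL b c a d)).
apply: (@lstep _ _ _ (1%:Z) (hCL b d a c)).
apply: (@lstep _ _ _ (1%:Z) (hCR b c d a)).
apply: (@lstep _ _ _ (- 1%:Z) (hC (mul b c) d a)).
apply: (@lstep _ _ _ (1%:Z) (hB (mul b c) a d)).
apply: (@lstep _ _ _ (- 2%:Z) (hA (mul b a) d c)).
apply: (@lstep _ _ _ (- 2%:Z) (hAR b d a c)).
apply: (@lstep _ _ _ (- 1%:Z) (hCL a d c b)).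
apply: (@lstep _ _ _ (1%:Z) (hCL a b c d)).
apply: (@lstep _ _ _ (- 3%:Z) (hA (mul a c) d b)).
apply: (@lstep _ _ _ (3%:Z) (hB (mul a c) b d)).
apply: (@lstep _ _ _ (1%:Z) (hAR a c b d)).
apply: (@lstep _ _ _ (- 1%:Z) (hA a b (mul c d))).
apply: (@lstep _ _ _ (1%:Z) (hAL b c d a)).
apply: (@lstep _ _ _ (- 1%:Z) (hA a c (mul b d))).
apply: (@lstep _ _ _ (- 3%:Z) (hC (mul a c) d b)).
apply: (@lstep _ _ _ (3%:Z) (hB b (mul a d) c)).
apply: (@lstep _ _ _ (1%:Z) (hA b c (mul a d))).
apply: (@lstep _ _ _ (3%:Z) (hBR b a c d)).
apply: (@lstep _ _ _ (- 3%:Z) (hCL a c d b)).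
apply: (@lstep _ _ _ (- 3%:Z) (hCL a c b d)).
apply: (@lstep _ _ _ (3%:Z) (hA (mul a b) c d)).
lin.
Qed.
End Alg.

Theorem mainTheorem18 (F : fieldType) (V : lmodType F) (mul : V -> V -> V) :
  [pchar F] =i pred0 ->
  bilinear_mul mul ->
  alternative mul ->
  (forall a b c : V, mul (mul a b) c = mul (mul b a) c) ->
  forall a b c d : V,
    mul (mul (mul a b) c) d = mul (mul (mul a c) b) d /\
    mul d (mul (mul a b) c) = mul (mul (mul a b) d) c /\
    mul d (mul c (mul a b)) = mul (mul (mul a c) d) b.
Proof.
move=> hch hb ha hc a b c d.
split; [|split]; apply/eqP; rewrite -subr_eq0; apply/eqP.
- exact: goal0.
- exact: goal1.
- exact: goal2.
Qed.
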